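(* Let $d\ge 3$. (a) The subKautz digraph $sK(d,2)$ is antipodal and has mean distance $\overline{\partial^*}=\dfrac{2d^2+3d-1}{d^2+d}$. (b) The cyclic Kautz digraph $CK(d,3)$ has mean distance $\overline{\partial}=\dfrac{3d^3+d^2-5d-2}{d^3-d}$.
   Context: SubKautz digraph $sK(d,2)$: vertices $x_1x_2$ with $x_1\neq x_2$ in $\mathbb Z_{d+1}$; arcs $x_1x_2\to x_2x_3$ for $x_3\neq x_1,x_2$. Cyclic Kautz digraph $CK(d,3)$: vertices $x_1x_2x_3\in\mathbb Z_{d+1}^3$ with $x_1,x_2,x_3$ pairwise distinct; arcs $x_1x_2x_3\to x_2x_3y$ for $y\neq x_2,x_3$. The mean distance of a digraph $G$ on $N$ vertices is $\frac{1}{N^2}\sum_{u,v\in V(G)}\mathrm{dist}(u,v)$ (pairs with $u=v$ included, contributing $0$); for a vertex-transitive digraph this equals $\frac1N\sum_{v}\mathrm{dist}(u,v)$ for any fixed $u$. A digraph is antipodal if every vertex $u$ has exactly one vertex $v$ at distance equal to the diameter from $u$, and simultaneously $u$ is at distance equal to the diameter from $v$. *)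

(* Defs.v *)
From mathcomp Require Import all_boot all_order all_algebra.
Set Implicit Arguments. Unset Strict Implicit. Unset Printing Implicit Defensive.

Fixpoint walk (T : finType) (e : rel T) (k : nat) (u v : T) : bool :=
  if k is k'.+1 then [exists w, e u w && walk e k' w v] else u == v.

(* A shortest walk,
   when one exists, has length < #|T|; if v is unreachable from u the value
   is #|T| (a convention, irrelevant for strongly connected digraphs). *)
Definition dist (T : finType) (e : rel T) (u v : T) : nat :=
  find (fun k => walk e k u v) (iota 0 #|T|).

Definition diameter (T : finType) (e : rel T) : nat :=
  \max_(u : T) \max_(v : T) dist e u v.

Definition mean_distance (T : finType) (e : rel T) : rat :=
  (\sum_(u : T) \sum_(v : T) dist e u v)%:R / (#|T| ^ 2)%:R.

Definition antipodal (T : finType) (e : rel T) : Prop :=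
  forall u : T,
    #|[set v | dist e u v == diameter e]| = 1 /\
    (forall v, dist e u v = diameter e -> dist e v u = diameter e).

Definition sK2_vert (d : nat) :=
  {p : 'I_d.+1 * 'I_d.+1 | p.1 != p.2}.

Definition sK2_arc (d : nat) : rel (sK2_vert d) :=
  fun u v => let: (x1, x2) := val u in let: (y2, x3) := val v in
    (y2 == x2) && (x3 != x1) && (x3 != x2).

Definition CK3_vert (d : nat) :=
  {p : 'I_d.+1 * 'I_d.+1 * 'I_d.+1 |
     [&& p.1.1 != p.1.2, p.1.1 != p.2 & p.1.2 != p.2]}.

Definition CK3_arc (d : nat) : rel (CK3_vert d) :=
  fun u v => let: (x1, x2, x3) := val u in let: (y2, y3, y) := val v in
    [&& y2 == x2, y3 == x3, y != x2 & y != x3].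

(* Main.v *)
Require Import Defs.
From mathcomp Require Import all_boot all_order all_algebra zify ring.

Lemma sum_sig (I:finType) (P : pred I) (F : I -> nat) :
  \sum_(x : {x | P x}) F (val x) = \sum_(i | P i) F i.
Proof.
rewrite (reindex_omap (val : {x | P x} -> I) insub); last first.
  by move=> i Pi; rewrite insubT.
apply: eq_bigl=> -[i iA]/=; by rewrite insubT ?iA /= eqxx.
Qed.

Lemma walk_ge (T : finType) (e : rel T) (f : T -> nat) (v : T) :
  f v = 0 -> (forall u w, e u w -> f u <= (f w).+1) ->
  forall k u, walk e k u v -> f u <= k.
Proof.
move=> fv mono; elim=> [|k IH] u /=; first by move/eqP->; rewrite fv.
case/existsP=> w /andP[euw wk]; apply: leq_trans (mono _ _ euw) _.
by rewrite ltnS IH.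
Qed.

Lemma walk_f (T : finType) (e : rel T) (f : T -> nat) (v : T) :
  (forall u, f u = 0 -> u = v) ->
  (forall u k, f u = k.+1 -> exists2 w, e u w & f w = k) ->
  forall k u, f u = k -> walk e k u v.
Proof.
move=> f0 step; elim=> [|k IH] u /= fu; first by rewrite (f0 _ fu).
have [w euw fw] := step _ _ fu; apply/existsP; exists w.
by rewrite euw IH.
Qed.

Lemma dist_eq (T : finType) (e : rel T) (f : T -> nat) (v : T) :
  (forall u, f u < #|T|) -> f v = 0 ->
  (forall u, f u = 0 -> u = v) ->
  (forall u w, e u w -> f u <= (f w).+1) ->
  (forall u k, f u = k.+1 -> exists2 w, e u w & f w = k) ->
  forall u, dist e u v = f u.
Proof.
move=> fT fv f0 mono step u; rewrite /dist.
have -> : #|T| = f u + (#|T| - f u) by rewrite subnKC // ltnW.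
rewrite iotaD find_cat.
have -> : has (fun k => walk e k u v) (iota 0 (f u)) = false.
  apply/negbTE/hasPn=> k; rewrite mem_iota add0n => /andP[_ kf].
  apply/negP=> /(@walk_ge _ _ _ _ fv mono k); rewrite leqNgt kf //.
rewrite size_iota add0n.
have : (0 < #|T| - f u)%N by rewrite subn_gt0.
case: (#|T| - f u)%N => // n _ /=.
by rewrite (@walk_f _ _ _ _ f0 step _ _ (erefl _)) addn0.
Qed.

Ltac bcase := repeat (rewrite ?eqxx /=; try solve [intros; congruence]; match goal with |- context [?x == ?y] => is_var x; is_var y; case: (x =P y) => [E|?]; [try subst|] end); rewrite ?eqxx /=; try congruence; try done; try lia.

Lemma fresh {d} (hd : 3 <= d) (x y z : 'I_d.+1) : exists w : 'I_d.+1, [&& w != x, w != y & w != z].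
Proof.
suff [k [k4 hk]] : exists k, k < 4 /\ [&& k != x, k != y & k != z].
  exists (inord k). by rewrite -!val_eqE /= inordK //; lia.
case h0: ([&& 0 != x, 0 != y & 0 != z]); first by exists 0.
case h1: ([&& 1 != x, 1 != y & 1 != z]); first by exists 1.
case h2: ([&& 2 != x, 2 != y & 2 != z]); first by exists 2.
exists 3; split => //. lia.
Qed.

Definition gK {d} (a b c e : 'I_d.+1) : nat :=
  if (c==a)&&(e==b) then 0 else if c==b then (if e==a then 4 else 1)
  else if (c==a)||(e==b) then 3 else 2.
Definition fK {d} (u v : sK2_vert d) := gK (val u).1 (val u).2 (val v).1 (val v).2.

Lemma monoK d (u w v : sK2_vert d) : sK2_arc u w -> fK u v <= (fK w v).+1.
Proof.
move: u w v => [[a b] /= hab] [[b' z] /= hbz] [[c e] /= hce].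
rewrite /sK2_arc /fK /gK /=. move: hab hbz hce. bcase.
Qed.

Lemma stepK d (hd : 3 <= d) (u v : sK2_vert d) k : fK u v = k.+1 ->
  exists2 w, sK2_arc u w & fK w v = k.
Proof.
move: u v => [[a b] /= hab] [[c e] /= hce].
rewrite /sK2_arc /fK /gK /=.
have mk : forall z : 'I_d.+1, z != a -> z != b ->
   exists2 w, sK2_arc (exist _ (a,b) hab) w & val w = (b, z).
  move=> z za zb. have h : (b, z).1 != (b, z).2 by rewrite /= eq_sym.
  by exists (exist _ (b,z) h) => //; rewrite /sK2_arc /= eqxx za zb.
case: (c =P b) => [cb|ncb].
  subst c. case: (e =P a) => [ea|nea].
    subst e. have ba : (b == a) = false by rewrite eq_sym (negbTE hab).
    rewrite ba /= => -[<-].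
    have [z /and3P[za zb _]] := fresh hd a b a.
    have [w aw vw] := mk z za zb. exists w => //. rewrite /fK /gK vw /=. clear mk aw.
    move: hab za zb; bcase.
  have -> : (b == a) = false by rewrite eq_sym (negbTE hab).
  move=> /= [<-]. exists (exist _ (b,e) hce) => /=.
    rewrite eqxx /= andbC /=. clear mk; move: hce nea; bcase.
  rewrite /fK /gK /=. bcase.
case: (c =P a) => [ca|nca].
  subst c. case: (e =P b) => // neb. move=> /= [<-].
  have [z /and3P[za zb ze]] := fresh hd a b e.
  have [w aw vw] := mk z za zb. exists w => //. rewrite /fK /gK vw /=. clear mk aw.
  move: hab za zb ze hce; bcase.
case: (e =P b) => [eb|neb].
  subst e. move=> /= [<-].
  have [z /and3P[za zb zc]] := fresh hd a b c.
  have [w aw vw] := mk z za zb. exists w => //. rewrite /fK /gK vw /=. clear mk aw.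
  move: hab za zb zc hce; bcase.
move=> /= [<-].
have [w aw vw] := mk c (introN eqP nca) (introN eqP ncb). exists w => //.
rewrite /fK /gK vw /=. clear mk aw. move: hce neb; bcase.
Qed.

Set Implicit Arguments. Unset Strict Implicit.

Lemma delta n (k : 'I_n) (H : 'I_n -> nat) : \sum_x (x == k) * H x = H k.
Proof. by rewrite (bigD1 k) //= eqxx mul1n big1 ?addn0 // => x /negbTE ->. Qed.

Lemma cnt1 d (k : 'I_d.+1) : \sum_x (k != x : nat) = d.
Proof.
have : \sum_x ((k != x) + (x == k)) = d.+1.
  rewrite (eq_bigr (fun _ => 1)) ?sum_nat_const ?card_ord ?muln1 // => x _.
  by rewrite eq_sym; case: eqP.
rewrite big_split /=.
have -> : \sum_x (x == k : nat) = 1.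
  by rewrite -(delta k (fun _ => 1)); apply: eq_bigr => x _; rewrite muln1.
lia.
Qed.

Lemma cnt2 d (k l : 'I_d.+1) : k != l -> \sum_x ((k != x) * (l != x)) = d.-1.
Proof.
move=> kl.
have : \sum_x ((k != x) * (l != x) + (x == l) * 1) = d.
  rewrite -[RHS](cnt1 k); apply: eq_bigr => x _. move: kl. bcase.
rewrite big_split /= delta; lia.
Qed.

Definition S2 d (F : 'I_d.+1 -> 'I_d.+1 -> nat) := \sum_c \sum_e (c != e) * F c e.

Lemma S2_ext d F G : (forall c e : 'I_d.+1, c != e -> F c e = G c e) -> S2 F = S2 G.
Proof.
move=> h; apply: eq_bigr => c _; apply: eq_bigr => e _.
by case: (boolP (c != e)) => ce; rewrite ?mul0n // h.
Qed.

Lemma S2D d F G : @S2 d (fun c e => F c e + G c e) = S2 F + S2 G.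
Proof.
rewrite /S2 -big_split; apply: eq_bigr => c _; rewrite -big_split.
by apply: eq_bigr => e _; rewrite mulnDr.
Qed.

Lemma S2M d k F : @S2 d (fun c e => k * F c e) = k * S2 F.
Proof.
rewrite /S2 big_distrr; apply: eq_bigr => c _; rewrite big_distrr.
by apply: eq_bigr => e _; rewrite mulnCA.
Qed.

Lemma S2_0 d : @S2 d (fun _ _ => 1) = d.+1 * d.
Proof.
rewrite /S2 (eq_bigr (fun _ => d)) ?sum_nat_const ?card_ord // => c _.
by rewrite -[RHS](cnt1 c); apply: eq_bigr => e _; rewrite muln1.
Qed.

Lemma S2_1 d (k : 'I_d.+1) : @S2 d (fun c e => c == k) = d.
Proof.
rewrite /S2 -[RHS](cnt1 k) -(delta k (fun c => \sum_e (c != e : nat))).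
apply: eq_bigr => c _; rewrite big_distrr; apply: eq_bigr => e _.
by rewrite mulnC.
Qed.

Lemma S2_2 d (k : 'I_d.+1) : @S2 d (fun c e => e == k) = d.
Proof.
rewrite /S2 exchange_big -[RHS](cnt1 k) -(delta k (fun e => \sum_c (k != c : nat))).
apply: eq_bigr => e _; rewrite big_distrr; apply: eq_bigr => c _.
case: (e =P k) => [->|_]; rewrite /= ?mul1n ?mul0n ?muln1 ?muln0; last by []. exact: (congr1 (fun b => nat_of_bool (~~ b)) (eq_sym c k)).
Qed.

Lemma S2_3 d (k l : 'I_d.+1) : k != l -> @S2 d (fun c e => (c == k) * (e == l)) = 1.
Proof.
move=> kl.
rewrite /S2 (eq_bigr (fun c => (c == k) * \sum_e ((c != e) * (e == l)))).
  rewrite delta (eq_bigr (fun e => (e == l) * (k != e))) ?delta ?kl //.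
  by move=> e _; rewrite mulnC.
move=> c _; rewrite big_distrr; apply: eq_bigr => e _.
by rewrite mulnCA.
Qed.


Lemma sumK_vert d (F : 'I_d.+1 -> 'I_d.+1 -> nat) :
  \sum_(v : sK2_vert d) F (val v).1 (val v).2 = S2 F.
Proof.
rewrite (@sum_sig _ (fun p : 'I_d.+1 * 'I_d.+1 => p.1 != p.2) (fun p => F p.1 p.2)).
rewrite /S2 pair_big /= big_mkcond; apply: eq_bigr => [[c e]] _ /=.
by case: (c != e); rewrite ?mul1n.
Qed.

Lemma cardK d : #|{: sK2_vert d}| = d.+1 * d.
Proof.
rewrite -sum1_card -(S2_0 d) -(sumK_vert (fun _ _ => 1)).
by apply: eq_bigl.
Qed.

Lemma sumK d (hd : 3 <= d) (u : sK2_vert d) : \sum_v fK u v = 2 * d ^ 2 + 3 * d - 1.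
Proof.
move: u => [[a b] /= hab].
rewrite /fK /= (sumK_vert (fun c e => gK a b c e)).
have E : S2 (fun c e => gK a b c e + ((c == b) + 4 * ((c == a) * (e == b)))) =
         S2 (fun c e => 2 * 1 + ((c == a) + ((e == b) + 3 * ((c == b) * (e == a))))).
  apply: S2_ext => c e ce; rewrite /gK; move: hab ce; bcase.
rewrite !S2D !S2M S2_0 !S2_1 S2_2 !S2_3 // 1?eq_sym // in E.
move: E. rewrite -mulnn. set X := S2 _. set Y := S2 _. nia.
Qed.

Lemma fK_le4 d (u v : sK2_vert d) : fK u v <= 4.
Proof. by rewrite /fK /gK; repeat case: ifP. Qed.

Lemma distK d (hd : 3 <= d) (u v : sK2_vert d) : dist (@sK2_arc d) u v = fK u v.
Proof.
apply: (@dist_eq _ _ (fun u => fK u v)) => //.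
- move=> w; apply: leq_ltn_trans (fK_le4 w v) _; rewrite cardK; nia.
- by move: v => [[c e] ?]; rewrite /fK /gK /= !eqxx.
- move=> w; move: w v => [[a b] hab] [[c e] hce]; rewrite /fK /gK /=.
  case: ifP => [/andP[/eqP ca /eqP eb] _ | _]; last by repeat case: ifP.
  subst; congr exist; apply: bool_irrelevance.
- move=> w w'; exact: monoK.
- move=> w k; exact: stepK.
Qed.

Lemma antiK_pf d (u : sK2_vert d) : ((val u).2, (val u).1).1 != ((val u).2, (val u).1).2.
Proof. by rewrite /= eq_sym (valP u). Qed.
Definition antiK d (u : sK2_vert d) : sK2_vert d :=
  exist _ ((val u).2, (val u).1) (antiK_pf u).

Lemma diamK d (hd : 3 <= d) : diameter (@sK2_arc d) = 4.
Proof.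
apply/eqP; rewrite eqn_leq; apply/andP; split.
  apply/bigmax_leqP => u _; apply/bigmax_leqP => v _; by rewrite distK // fK_le4.
have h0 : (ord0 : 'I_d.+1) != ord_max by rewrite -val_eqE /=; lia.
pose u0 : sK2_vert d := exist _ (ord0, ord_max) h0.
apply: (leq_trans _ (leq_bigmax u0)); apply: (leq_trans _ (leq_bigmax (antiK u0))).
rewrite distK // /fK /gK /= (negbTE h0) andbF eqxx //.
Qed.

Lemma antipodalK d (hd : 3 <= d) : antipodal (@sK2_arc d).
Proof.
move=> u; rewrite diamK //; split.
  have -> : [set v | dist (@sK2_arc d) u v == 4] = [set antiK u].
    apply/setP => v; rewrite !inE distK //.
    have -> : (v == antiK u) = (val v == val (antiK u)) by [].
    move: u v => [[a b] hab] [[c e] hce]; rewrite /fK /gK /antiK /= xpair_eqE.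
    move: hab hce; bcase.
  by rewrite cards1.
move=> v; rewrite !distK //.
move: u v => [[a b] hab] [[c e] hce]; rewrite /fK /gK /=.
move: hab hce; bcase.
Qed.


Definition gC {d} (a b c x y z : 'I_d.+1) : nat :=
  if [&& x == a, y == b & z == c] then 0 else if (x == b) && (y == c) then 1
  else if x == c then (if y == b then 5 else 2)
  else if (x == b) || (y == c) then 4 else 3.
Definition fC {d} (u v : CK3_vert d) :=
  gC (val u).1.1 (val u).1.2 (val u).2 (val v).1.1 (val v).1.2 (val v).2.

Lemma monoC_aux d (a b c w x y z : 'I_d.+1) :
  [&& a != b, a != c & b != c] -> w != b -> w != c -> [&& x != y, x != z & y != z] ->
  gC a b c x y z <= (gC b c w x y z).+1.
Proof. rewrite /gC. bcase. Qed.

Lemma monoC d (u w v : CK3_vert d) : CK3_arc u w -> fC u v <= (fC w v).+1.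
Proof.
move: u w v => [[[a b] c] /= hu] [[[b' c'] w] /= hw] [[[x y] z] /= hv].
rewrite /CK3_arc /fC /= => /and4P[/eqP -> /eqP -> wb wc].
exact: monoC_aux.
Qed.

Lemma stepC_aux d (hd : 3 <= d) (a b c x y z : 'I_d.+1) k :
  [&& a != b, a != c & b != c] -> [&& x != y, x != z & y != z] ->
  gC a b c x y z = k.+1 -> exists w, [&& w != b, w != c & gC b c w x y z == k].
Proof.
rewrite /gC => hu hv.
case h1 : [&& x == a, y == b & z == c] => //.
case h2 : ((x == b) && (y == c)).
  move=> H; exists z; move: hu hv h1 h2 H; bcase.
case h3 : (x == c).
  case h4 : (y == b).
    move=> H; exists a; move: hu hv h1 h2 h3 h4 H; bcase.
  move=> H; exists y; move: hu hv h1 h2 h3 h4 H; bcase.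
case h5 : (x == b).
  have [w /and3P[w1 w2 w3]] := fresh hd b c y.
  move=> H; exists w; move: w1 w2 w3 hu hv h1 h2 h3 h5 H; bcase.
case h6 : (y == c).
  have [w /and3P[w1 w2 w3]] := fresh hd b c x.
  move=> H; exists w; move: w1 w2 w3 hu hv h1 h2 h3 h5 h6 H; bcase.
move=> H; exists x; move: hu hv h1 h2 h3 h5 h6 H; bcase.
Qed.

Lemma stepC d (hd : 3 <= d) (u v : CK3_vert d) k : fC u v = k.+1 ->
  exists2 w, CK3_arc u w & fC w v = k.
Proof.
move: u v => [[[a b] c] /= hu] [[[x y] z] /= hv].
rewrite /fC /= => H.
have [w /and3P[wb wc /eqP E]] := stepC_aux hd hu hv H.
have hw : [&& ((b, c), w).1.1 != ((b, c), w).1.2, ((b, c), w).1.1 != ((b, c), w).2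
            & ((b, c), w).1.2 != ((b, c), w).2].
  rewrite /= (eq_sym b w) (eq_sym c w) wb wc !andbT; by case/and3P: hu.
exists (exist _ ((b,c),w) hw) => //.
by rewrite /CK3_arc /= !eqxx wb wc.
Qed.


Definition Q {d} (x y z : 'I_d.+1) : nat := (x != y) * ((x != z) * (y != z)).
Definition S3 d (F : 'I_d.+1 -> 'I_d.+1 -> 'I_d.+1 -> nat) :=
  \sum_x \sum_y \sum_z Q x y z * F x y z.

Lemma sumC_vert d (F : 'I_d.+1 -> 'I_d.+1 -> 'I_d.+1 -> nat) :
  \sum_(v : CK3_vert d) F (val v).1.1 (val v).1.2 (val v).2 = S3 F.
Proof.
rewrite (@sum_sig _ (fun p : 'I_d.+1 * 'I_d.+1 * 'I_d.+1 =>
   [&& p.1.1 != p.1.2, p.1.1 != p.2 & p.1.2 != p.2]) (fun p => F p.1.1 p.1.2 p.2)).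
rewrite /S3 pair_big pair_big /= big_mkcond; apply: eq_bigr => [[[x y] z]] _ /=.
rewrite /Q; by case: (x != y); case: (x != z); case: (y != z); rewrite ?mul1n.
Qed.

Lemma S3_ext d F G : (forall x y z : 'I_d.+1, [&& x != y, x != z & y != z] -> F x y z = G x y z) ->
  S3 F = S3 G.
Proof.
move=> h; apply: eq_bigr => x _; apply: eq_bigr => y _; apply: eq_bigr => z _.
rewrite /Q. case: (boolP [&& x != y, x != z & y != z]) => [H|]; first by rewrite h.
by case: (x != y); case: (x != z); case: (y != z).
Qed.

Lemma S3D d F G : @S3 d (fun x y z => F x y z + G x y z) = S3 F + S3 G.
Proof.
rewrite /S3 -big_split; apply: eq_bigr => x _; rewrite -big_split.
apply: eq_bigr => y _; rewrite -big_split.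
by apply: eq_bigr => z _; rewrite mulnDr.
Qed.

Lemma S3M d k F : @S3 d (fun x y z => k * F x y z) = k * S3 F.
Proof.
rewrite /S3 big_distrr; apply: eq_bigr => x _; rewrite big_distrr.
apply: eq_bigr => y _; rewrite big_distrr.
by apply: eq_bigr => z _; rewrite mulnCA.
Qed.

Lemma S3_S2 d (G : 'I_d.+1 -> 'I_d.+1 -> nat) :
  S3 (fun x y _ => G x y) = S2 (fun x y => G x y * d.-1).
Proof.
apply: eq_bigr => x _; apply: eq_bigr => y _.
rewrite (eq_bigr (fun z => G x y * Q x y z)); last by move=> z _; rewrite mulnC.
rewrite -big_distrr /= /Q.
case: (boolP (x != y)) => xy.
  rewrite (eq_bigr (fun z => (x != z) * (y != z))) ?cnt2 ?mul1n //.
  by move=> z _; rewrite mul1n.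
by rewrite big1 ?muln0 ?mul0n // => z _; rewrite mul0n.
Qed.

Lemma T0 d : @S3 d (fun _ _ _ => 1) = d.+1 * d * d.-1.
Proof.
rewrite (S3_S2 (fun _ _ => 1)) (S2_ext (G := fun _ _ => d.-1 * 1)).
  by rewrite S2M S2_0 mulnC.
by move=> *; rewrite mul1n muln1.
Qed.

Lemma T1x d (k : 'I_d.+1) : @S3 d (fun x _ _ => x == k) = d * d.-1.
Proof.
rewrite (S3_S2 (fun x _ => x == k)) (S2_ext (G := fun x _ => d.-1 * (x == k))).
  by rewrite S2M S2_1 mulnC.
by move=> *; rewrite mulnC.
Qed.

Lemma T1y d (k : 'I_d.+1) : @S3 d (fun _ y _ => y == k) = d * d.-1.
Proof.
rewrite (S3_S2 (fun _ y => y == k)) (S2_ext (G := fun _ y => d.-1 * (y == k))).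
  by rewrite S2M S2_2 mulnC.
by move=> *; rewrite mulnC.
Qed.

Lemma T2 d (k l : 'I_d.+1) : k != l -> @S3 d (fun x y _ => (x == k) * (y == l)) = d.-1.
Proof.
move=> kl.
rewrite (S3_S2 (fun x y => (x == k) * (y == l)))
   (S2_ext (G := fun x y => d.-1 * ((x == k) * (y == l)))).
  by rewrite S2M S2_3 ?muln1.
by move=> *; rewrite mulnC.
Qed.

Lemma T3 d (k l m : 'I_d.+1) : [&& k != l, k != m & l != m] ->
  @S3 d (fun x y z => (x == k) * ((y == l) * (z == m))) = 1.
Proof.
move=> h.
transitivity (\sum_x (x == k) * \sum_y (y == l) * \sum_z (z == m) * Q x y z).
  apply: eq_bigr => x _; rewrite big_distrr; apply: eq_bigr => y _.
  rewrite !big_distrr; apply: eq_bigr => z _ /=.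
  by rewrite mulnC -!mulnA.
rewrite delta delta delta /Q.
by case/and3P: h => -> -> ->.
Qed.


Lemma cardC3 d : #|{: CK3_vert d}| = d.+1 * d * d.-1.
Proof.
rewrite -sum1_card -(T0 d) -(sumC_vert (fun _ _ _ => 1)).
by apply: eq_bigl.
Qed.

Lemma fC_le5 d (u v : CK3_vert d) : fC u v <= 5.
Proof. by rewrite /fC /gC; repeat case: ifP. Qed.

Lemma distC d (hd : 3 <= d) (u v : CK3_vert d) : dist (@CK3_arc d) u v = fC u v.
Proof.
apply: (@dist_eq _ _ (fun u => fC u v)) => //.
- move=> w; apply: leq_ltn_trans (fC_le5 w v) _; rewrite cardC3.
  case: d hd {u v w} => // d hd /=. nia.
- by move: v => [[[x y] z] ?]; rewrite /fC /gC /= !eqxx.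
- move=> w; move: w v => [[[a b] c] hu] [[[x y] z] hv]; rewrite /fC /gC /=.
  case: ifP => [/and3P[/eqP xa /eqP yb /eqP zc] _ | _]; last by repeat case: ifP.
  subst; congr exist; apply: bool_irrelevance.
- move=> w w'; exact: monoC.
- move=> w k; exact: stepC.
Qed.

Lemma sumC d (hd : 3 <= d) (u : CK3_vert d) :
  \sum_v fC u v = 3 * d ^ 3 + d ^ 2 - 5 * d - 2.
Proof.
move: u => [[[a b] c] /= hu].
rewrite /fC /= (sumC_vert (fun x y z => gC a b c x y z)).
have E : forall k3 k4 : nat, k3 = 3 -> k4 = 4 ->
         S3 (fun x y z => gC a b c x y z + (k4 * ((x == b) * (y == c)) +
            ((x == c) + k3 * ((x == a) * ((y == b) * (z == c)))))) =
         S3 (fun x y z => k3 * 1 + ((x == b) + ((y == c) + k3 * ((x == c) * (y == b))))).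
  move=> k3 k4 -> ->.
  apply: S3_ext => x y z hv; rewrite /gC; move: hu hv; bcase.
have [k3 e3] : exists k3, k3 = 3 by eexists.
have [k4 e4] : exists k4, k4 = 4 by eexists.
have {E} E := E k3 k4 e3 e4.
have hbc : b != c by case/and3P: hu.
have hcb : c != b by rewrite eq_sym.
rewrite !S3D !S3M T0 !T1x !T1y !T2 // T3 // in E.
move: E. set X := S3 _. clearbody X. subst k3 k4.
clear a b c hu hbc hcb. case: d hd X => // d hd X /=.
rewrite !expnS expn0 !muln1. nia.
Qed.

Import GRing.Theory Num.Theory.
Local Open Scope ring_scope.
Lemma mean_eq (T : finType) (e : rel T) (S : nat) :
  (forall u, (\sum_v dist e u v)%N = S) -> (0 < #|T|)%N ->
  mean_distance e = S%:R / #|T|%:R.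
Proof.
move=> hS hT; rewrite /mean_distance (eq_bigr (fun _ => S)) // sum_nat_const.
have h0 : (#|T|%:R : rat) != 0 by rewrite pnatr_eq0 -lt0n.
rewrite natrM natrX. field. exact: h0.
Qed.

Unset Implicit Arguments.
Local Open Scope ring_scope.

Theorem mainTheorem15 (d : nat) (hd : (3 <= d)%N) :
  (antipodal (@sK2_arc d) /\
   mean_distance (@sK2_arc d) =
     (2 * d ^ 2 + 3 * d - 1)%N%:R / (d ^ 2 + d)%N%:R) /\
  mean_distance (@CK3_arc d) =
     (3 * d ^ 3 + d ^ 2 - 5 * d - 2)%N%:R / (d ^ 3 - d)%N%:R.
Proof.
split; [split|].
- exact: antipodalK.
- rewrite (@mean_eq _ _ (2 * d ^ 2 + 3 * d - 1)).
  + rewrite cardK (_ : (d.+1 * d)%N = (d ^ 2 + d)%N) //.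
    rewrite -mulnn; lia.
  + move=> u; rewrite (eq_bigr _ (fun v _ => distK hd u v)); exact: sumK.
  + rewrite cardK; nia.
- rewrite (@mean_eq _ _ (3 * d ^ 3 + d ^ 2 - 5 * d - 2)).
  + rewrite cardC3 (_ : (d.+1 * d * d.-1)%N = (d ^ 3 - d)%N) //.
    case: d hd => // d hd /=. rewrite !expnS expn0 !muln1. nia.
  + move=> u; rewrite (eq_bigr _ (fun v _ => distC hd u v)); exact: sumC.
  + rewrite cardC3; case: d hd => // d hd /=; nia.
Qed.
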